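(* Let $R$ be a commutative ring with identity and $M$ a non-zero comultiplication $R$-module. Then the large sum graph $G'(M)$ is a null graph (has no vertices) if and only if $M$ is a cocyclic module.
   Context: An $R$-module $M$ is a comultiplication module if for every submodule $N$ of $M$ there is an ideal $I$ of $R$ with $N=\mathrm{Ann}_M(I)$. A submodule $N$ of $M$ is large in $M$ if $N\cap L\neq 0$ for every non-zero submodule $L$ of $M$. $\mathrm{Soc}(M)$ is the sum of all minimal submodules of $M$. $M$ is cocyclic if $\mathrm{Soc}(M)$ is a simple submodule of $M$ that is large in $M$. The large sum graph $G'(M)$ has as vertex set the set of all non-zero non-large submodules of $M$, and two distinct vertices $N,K$ are adjacent iff $N+K$ is a non-large submodule of $M$. *)

(* Defs.v *)
From HB Require Import structures.
From mathcomp Require Import all_boot all_order all_algebra.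
Set Implicit Arguments. Unset Strict Implicit. Unset Printing Implicit Defensive.
Import GRing.Theory.
Local Open Scope ring_scope.

(* Subsets of a module are predicates M -> Prop (modules may be infinite). *)
Definition is_submodule (R : comNzRingType) (M : lmodType R) (N : M -> Prop) : Prop :=
  N 0 /\ (forall x y, N x -> N y -> N (x + y)) /\ (forall (r : R) x, N x -> N (r *: x)).

Definition is_ideal (R : comNzRingType) (I : R -> Prop) : Prop :=
  I 0 /\ (forall a b, I a -> I b -> I (a + b)) /\ (forall r a, I a -> I (r * a)).

Definition annM (R : comNzRingType) (M : lmodType R) (I : R -> Prop) : M -> Prop :=
  fun m => forall r, I r -> r *: m = 0.

Definition comultiplication_module (R : comNzRingType) (M : lmodType R) : Prop :=
  forall N : M -> Prop, is_submodule N ->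
    exists I : R -> Prop, is_ideal I /\ (forall m, N m <-> annM I m).

Definition nonzero_sub (R : comNzRingType) (M : lmodType R) (N : M -> Prop) : Prop :=
  exists x, N x /\ x <> 0.

Definition large (R : comNzRingType) (M : lmodType R) (N : M -> Prop) : Prop :=
  forall L : M -> Prop, is_submodule L -> nonzero_sub L ->
    exists x, N x /\ L x /\ x <> 0.

Definition minimal_sub (R : comNzRingType) (M : lmodType R) (N : M -> Prop) : Prop :=
  is_submodule N /\ nonzero_sub N /\
  forall K : M -> Prop, is_submodule K -> (forall x, K x -> N x) ->
    (forall x, K x -> x = 0) \/ (forall x, N x -> K x).

(* Soc(M): sum of all minimal submodules = finite sums of elements of minimal submodules *)
Definition socle (R : comNzRingType) (M : lmodType R) : M -> Prop :=
  fun m => exists s : seq M,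
    (forall y, y \in s -> exists N, minimal_sub N /\ N y) /\ m = \sum_(y <- s) y.

Definition cocyclic (R : comNzRingType) (M : lmodType R) : Prop :=
  minimal_sub (@socle R M) /\ large (@socle R M).

(* vertices of the large sum graph G'(M): non-zero non-large submodules *)
Definition lsg_vertex (R : comNzRingType) (M : lmodType R) (N : M -> Prop) : Prop :=
  is_submodule N /\ nonzero_sub N /\ ~ large N.

Definition lsg_adj (R : comNzRingType) (M : lmodType R) (N K : M -> Prop) : Prop :=
  lsg_vertex N /\ lsg_vertex K /\ N <> K /\
  ~ large (fun m => exists a b, N a /\ K b /\ m = a + b).

Definition lsg_null (R : comNzRingType) (M : lmodType R) : Prop :=
  forall N : M -> Prop, ~ lsg_vertex N.

(* Main.v *)
Require Import Defs.
From mathcomp Require Import all_boot all_order all_algebra.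
From Stdlib Require Import Classical.
Set Implicit Arguments. Unset Strict Implicit. Unset Printing Implicit Defensive.
Import GRing.Theory.
Local Open Scope ring_scope.

Lemma sub_ext (R : comNzRingType) (M : lmodType R) (A B : M -> Prop) :
  (forall m, A m <-> B m) -> is_submodule A -> is_submodule B.
Proof.
move=> e [h0 [hD hZ]]; split; first by apply/e.
split; first by move=> x y /e hx /e hy; apply/e; apply: hD.
by move=> r x /e hx; apply/e; apply: hZ.
Qed.

Lemma minimal_ext (R : comNzRingType) (M : lmodType R) (A B : M -> Prop) :
  (forall m, A m <-> B m) -> minimal_sub A -> minimal_sub B.
Proof.
move=> e [hs [[x [hx x0]] hm]]; split; first exact: sub_ext e hs.
split; first by exists x; split=> //; apply/e.
move=> K Ks KB; have KA : forall x, K x -> A x by move=> y /KB /e.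
case: (hm K Ks KA) => h; [by left | right].
by move=> y /e /h.
Qed.

Lemma large_ext (R : comNzRingType) (M : lmodType R) (A B : M -> Prop) :
  (forall m, A m <-> B m) -> large A -> large B.
Proof.
move=> e hl L Ls Lnz; have [x [hx [hL x0]]] := hl L Ls Lnz.
by exists x; split=> //; apply/e.
Qed.

Lemma inter_sub (R : comNzRingType) (M : lmodType R) (A B : M -> Prop) :
  is_submodule A -> is_submodule B -> is_submodule (fun m => A m /\ B m).
Proof.
move=> [a0 [aD aZ]] [b0 [bD bZ]]; split; first by split.
split; first by move=> x y [? ?] [? ?]; split; [apply: aD|apply: bD].
by move=> r x [? ?]; split; [apply: aZ|apply: bZ].
Qed.

Lemma cyc_sub (R : comNzRingType) (M : lmodType R) (y : M) :
  is_submodule (fun m => exists s : R, m = s *: y).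
Proof.
split; first by exists 0; rewrite scale0r.
split; first by move=> a b [s ->] [t ->]; exists (s + t); rewrite scalerDl.
by move=> r x [s ->]; exists (r * s); rewrite scalerA.
Qed.

Lemma large_of_null (R : comNzRingType) (M : lmodType R) :
  lsg_null M -> forall N : M -> Prop, is_submodule N -> nonzero_sub N -> large N.
Proof.
move=> hn N Ns Nnz; apply: NNPP => hl; apply: (hn N); split=> //; split=> //.
Qed.

Lemma backward (R : comNzRingType) (M : lmodType R) : cocyclic M -> lsg_null M.
Proof.
move=> [[Ss [Snz Smin]] Sl] N [Ns [Nnz Nnl]]; apply: Nnl => L Ls Lnz.
have SN : forall m, socle m -> N m.
  have [x [Sx [Nx x0]]] := Sl N Ns Nnz.
  case: (Smin _ (inter_sub Ss Ns)) => [y [] //|h|h].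
  - by case: x0; apply: h.
  - by move=> m /h [].
have [x [Sx [Lx x0]]] := Sl L Ls Lnz.
by exists x; split=> //; apply: SN.
Qed.

Lemma forward (R : comNzRingType) (M : lmodType R) :
  (exists x : M, x <> 0) -> comultiplication_module M -> lsg_null M -> cocyclic M.
Proof.
move=> [x x0] hc hn.
have hl := large_of_null hn.
pose J := fun r : R => exists z : M, z <> 0 /\ r *: z = 0.
have J_add : forall a b, J a -> J b -> J (a + b).
  move=> a b [z [z0 az]] [w [w0 bw]].
  have [u [[c uc] [[d ud] u0]]] :=
    hl _ (cyc_sub z) (ex_intro _ z (conj (ex_intro _ 1 (esym (scale1r z))) z0))
       _ (cyc_sub w) (ex_intro _ w (conj (ex_intro _ 1 (esym (scale1r w))) w0)).
  exists u; split=> //; rewrite scalerDl.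
  have -> : a *: u = 0 by rewrite uc scalerA mulrC -scalerA az scaler0.
  by rewrite ud scalerA mulrC -scalerA bw scaler0 addr0.
have J_mul : forall r a, J a -> J (r * a).
  by move=> r a [z [z0 az]]; exists z; split=> //; rewrite -scalerA az scaler0.
have J1 : ~ J 1 by move=> [z [z0]]; rewrite scale1r.
pose Jx := fun m : M => exists b, J b /\ m = b *: x.
have Jxs : is_submodule Jx.
  split; first by exists 0; split; [exists x; rewrite scale0r | rewrite scale0r].
  split; first by move=> m1 m2 [a [Ja ->]] [b [Jb ->]]; exists (a + b);
    split; [apply: J_add | rewrite scalerDl].
  by move=> r m [a [Ja ->]]; exists (r * a); split; [apply: J_mul|rewrite scalerA].
have [r [rx0 rJ]] : exists r : R, r *: x <> 0 /\ forall b, J b -> (r * b) *: x = 0.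
  apply: NNPP => hno.
  have [I [_ eI]] := hc Jx Jxs.
  have : annM I x.
    move=> i Ii; apply: NNPP => ix0; apply: hno; exists i; split=> // b Jb.
    rewrite -scalerA; apply: (proj1 (eI _)); last exact: Ii.
    by exists b.
  move/(proj2 (eI x)) => [b [Jb xb]].
  apply: J1; have -> : (1 : R) = b + (1 - b) by rewrite addrC subrK.
  apply: J_add => //; exists x; split=> //.
  by rewrite scalerBl scale1r -xb subrr.
pose y := r *: x.
have Jy : forall b, J b -> b *: y = 0.
  by move=> b Jb; rewrite /y scalerA mulrC; apply: rJ.
pose Ry := fun m : M => exists s : R, m = s *: y.
have Ryy : Ry y by exists 1; rewrite scale1r.
have Rymin : minimal_sub Ry.
  split; first exact: cyc_sub.
  split; first by exists y.
  move=> K Ks KRy.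
  case: (classic (exists w, K w /\ w <> 0)) => [[w [Kw w0]]|hno]; last first.
    by left=> m Km; apply: NNPP => m0; apply: hno; exists m.
  right; have [I [_ eI]] := hc _ (cyc_sub w).
  have : annM I y.
    move=> i Ii; apply: Jy; exists w; split=> //.
    by apply: (proj1 (eI w)) => //; exists 1; rewrite scale1r.
  move/(proj2 (eI y)) => [t yt].
  have Ky : K y by rewrite yt; apply: (proj2 (proj2 Ks)).
  by move=> m [u ->]; apply: (proj2 (proj2 Ks)).
have Rylarge : large Ry by apply: hl; [exact: cyc_sub | exists y].
have eS : forall m, Ry m <-> socle m.
  move=> m; split.
    move=> hm; exists [:: m]; split; last by rewrite big_seq1.
    by move=> z; rewrite inE => /eqP ->; exists Ry.
  move=> [s [hs ->]]; elim: s hs => [|a s IH] hs.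
    by rewrite big_nil; exists 0; rewrite scale0r.
  rewrite big_cons; apply: (proj1 (proj2 (cyc_sub y))); last first.
    by apply: IH => z zs; apply: hs; rewrite inE zs orbT.
  have [N [[Ns [Nnz Nmin]] Na]] := hs a (mem_head _ _).
  have [u [[c uc] [Nu u0]]] := Rylarge N Ns Nnz.
  case: (Nmin _ (inter_sub (cyc_sub y) Ns)) => [z [] //|h|h].
  - by case: u0; apply: h; split=> //; exists c.
  - by have [] := h a Na.
split; first exact: minimal_ext eS Rymin.
exact: large_ext eS Rylarge.
Qed.

Theorem proposition2p4 (R : comNzRingType) (M : lmodType R) :
  (exists x : M, x <> 0%R) -> @comultiplication_module R M ->
  (@lsg_null R M <-> @cocyclic R M).
Proof.
move=> hx hc; split; [exact: forward | exact: backward].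
Qed.
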